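(* If $\Gamma$ is a graph of order $n$ and minimum degree $\delta>0$, then $\gamma_0^o(\Gamma)\le\frac{n}{2}$.
   Context: Graphs are finite and simple. For $S\subseteq V$ and $v\in V$, $\delta_S(v)$ is the number of neighbours of $v$ in $S$, $\overline{S}=V\setminus S$, and $\partial(S)$ the set of vertices of $\overline{S}$ with a neighbour in $S$. A nonempty $S$ is an offensive $0$-alliance if $\delta_S(v)\ge\delta_{\overline{S}}(v)$ for all $v\in\partial(S)$, and a global offensive $0$-alliance if moreover it is dominating. $\gamma_0^o(\Gamma)$ denotes the minimum cardinality of a global offensive $0$-alliance in $\Gamma$. *)

(* Defs.v *)
From mathcomp Require Import all_boot.
Set Implicit Arguments. Unset Strict Implicit. Unset Printing Implicit Defensive.

Definition simple_graph (T : finType) (e : rel T) : Prop :=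
  symmetric e /\ irreflexive e.

Definition nbhd (T : finType) (e : rel T) (v : T) : {set T} := [set u | e v u].

Definition deltaS (T : finType) (e : rel T) (S : {set T}) (v : T) : nat :=
  #|nbhd e v :&: S|.

Definition boundary (T : finType) (e : rel T) (S : {set T}) : {set T} :=
  [set v in ~: S | [exists u in S, e v u]].

Definition offensive0 (T : finType) (e : rel T) (S : {set T}) : bool :=
  (S != set0) &&
  [forall v in boundary e S, deltaS e (~: S) v <= deltaS e S v].

Definition dominating (T : finType) (e : rel T) (S : {set T}) : bool :=
  [forall v in ~: S, [exists u in S, e v u]].

Definition global_offensive0 (T : finType) (e : rel T) (S : {set T}) : bool :=
  offensive0 e S && dominating e S.

(* gamma_0^o: minimum cardinality of a global offensive 0-alliance
   (the default #|T| is only reached when none exists, i.e. T empty). *)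
Definition gamma0o (T : finType) (e : rel T) : nat :=
  \big[minn/#|T|]_(S : {set T} | global_offensive0 e S) #|S|.

Definition min_degree (T : finType) (e : rel T) : nat :=
  \big[minn/#|T|]_(v : T) #|nbhd e v|.

(* Main.v *)
Require Import Defs.
From mathcomp Require Import all_boot.
From mathcomp Require Import zify.
Set Implicit Arguments.

Lemma bigmin_le (I : finType) (P : pred I) (F : I -> nat) x0 v :
  P v -> \big[minn/x0]_(i | P i) F i <= F v.
Proof.
move=> Pv; rewrite -big_filter.
have : v \in filter P (index_enum I) by rewrite mem_filter Pv mem_index_enum.
elim: (filter P (index_enum I)) => //= a s IH.
rewrite big_cons inE => /orP [/eqP ->|/IH]; first exact: geq_minl.
by move/(leq_trans _); apply; exact: geq_minr.
Qed.

Section Aux.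
Variables (T : finType) (e : rel T).

Definition hh (S : {set T}) x y := e x y && ((x \in S) == (y \in S)).
Definition cc (S : {set T}) x y := e x y && ((x \in S) != (y \in S)).
Definition same (S : {set T}) := \sum_x \sum_y (hh S x y : nat).
Definition tog (S : {set T}) v := [set x | (x \in S) != (x == v)].

Hypothesis sg : simple_graph e.

Lemma pointwise S v x y :
  (hh (tog S v) x y : nat) + (x == v) * hh S x y + (y == v) * hh S x y =
  (hh S x y : nat) + (x == v) * cc S x y + (y == v) * cc S x y.
Proof.
case: sg => sym irr.
rewrite /hh /cc !inE.
case: (eqVneq x v) => [->|xv]; case: (eqVneq y v) => [->|yv] /=.
- by rewrite irr.
- by case: (v \in S) (y \in S) (e v y) => [] [] [].
- by case: (v \in S) (x \in S) (e x v) => [] [] [].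
- by rewrite !mul0n !addn0; case: (x \in S); case: (y \in S).
Qed.

Lemma split3 (F G H : T -> T -> nat) :
  \sum_x \sum_y (F x y + G x y + H x y) =
  \sum_x \sum_y F x y + \sum_x \sum_y G x y + \sum_x \sum_y H x y.
Proof. by rewrite -!big_split; apply: eq_bigr => x _; rewrite -!big_split. Qed.

Lemma sum_eqv (F : T -> nat) v : \sum_x (x == v) * F x = F v.
Proof.
rewrite (bigD1 v) //= eqxx mul1n big1 ?addn0 // => x /negbTE ->.
by rewrite mul0n.
Qed.

Lemma dS_sum (A : {set T}) v : deltaS e A v = \sum_y (e v y && (y \in A) : nat).
Proof.
rewrite /deltaS -sum1_card big_mkcond /=; apply: eq_bigr => y _.
by rewrite !inE; case: (e v y); case: (y \in A).
Qed.

Lemma same_tog S v :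
  same (tog S v) + 2 * \sum_y (hh S v y : nat)
  = same S + 2 * \sum_y (cc S v y : nat).
Proof.
case: sg => sym irr.
have E : \sum_x \sum_y ((hh (tog S v) x y : nat) + (x == v) * hh S x y + (y == v) * hh S x y)
   = \sum_x \sum_y ((hh S x y : nat) + (x == v) * cc S x y + (y == v) * cc S x y).
  by apply: eq_bigr => x _; apply: eq_bigr => y _; apply: pointwise.
rewrite !split3 in E.
have K1 (F : T -> T -> nat) : \sum_x \sum_y (x == v) * F x y = \sum_y F v y.
  rewrite -(sum_eqv (fun x => \sum_y F x y)); apply: eq_bigr => x _.
  by rewrite big_distrr.
have K2 (F : T -> T -> nat) : \sum_x \sum_y (y == v) * F x y = \sum_x F x v.
  by apply: eq_bigr => x _; rewrite sum_eqv.
rewrite !K1 !K2 in E.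
have Hs : \sum_x (hh S x v : nat) = \sum_y (hh S v y : nat).
  by apply: eq_bigr => x _; rewrite /hh sym eq_sym.
have Cs : \sum_x (cc S x v : nat) = \sum_y (cc S v y : nat).
  by apply: eq_bigr => x _; rewrite /cc sym eq_sym.
rewrite Hs Cs in E.
rewrite /same; lia.
Qed.

Lemma min_prop S : (forall S', same S <= same S') ->
  forall v, v \notin S -> deltaS e (~: S) v <= deltaS e S v.
Proof.
move=> Hmin v vS.
have := same_tog S v; have := Hmin (tog S v).
have -> : \sum_y (hh S v y : nat) = deltaS e (~: S) v.
  rewrite dS_sum; apply: eq_bigr => y _; rewrite /hh !inE (negbTE vS).
  by case: (y \in S).
have -> : \sum_y (cc S v y : nat) = deltaS e S v.
  rewrite dS_sum; apply: eq_bigr => y _; rewrite /cc (negbTE vS).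
  by case: (y \in S).
lia.
Qed.

Lemma deg_split (A : {set T}) v : deltaS e A v + deltaS e (~: A) v = #|nbhd e v|.
Proof. by rewrite /deltaS -setDE cardsID. Qed.

Lemma mindeg_le v : min_degree e <= #|nbhd e v|.
Proof. exact: bigmin_le. Qed.

Lemma alliance (A : {set T}) : 0 < min_degree e -> 0 < #|T| ->
  (forall v, v \notin A -> deltaS e (~: A) v <= deltaS e A v) ->
  global_offensive0 e A.
Proof.
move=> md nT P.
have pos v : v \notin A -> 0 < deltaS e A v.
  move=> vA; have := P v vA; have := deg_split A v; have := mindeg_le v; lia.
have nb v : v \notin A -> [exists u in A, e v u].
  move=> vA; have := pos v vA; rewrite /deltaS card_gt0 => /set0Pn [u].
  rewrite !inE => /andP [evu uA]; apply/existsP; exists u; by rewrite uA.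
apply/andP; split; last first.
  by apply/forallP => v; apply/implyP; rewrite inE => /nb.
apply/andP; split.
  move: nT => /card_gt0P [v _].
  case vA: (v \in A); first by apply/set0Pn; exists v.
  have := pos v (negbT vA); rewrite /deltaS card_gt0 => /set0Pn [u].
  by rewrite inE => /andP [_ uA]; apply/set0Pn; exists u.
apply/forallP => v; apply/implyP; rewrite /boundary !inE => /andP [vA _].
exact: P.
Qed.

Lemma gamma_le (A : {set T}) : global_offensive0 e A -> gamma0o e <= #|A|.
Proof. by move=> H; rewrite /gamma0o; apply: bigmin_le. Qed.

End Aux.

Theorem mainTheorem7 (T : finType) (e : rel T) :
  simple_graph e -> 0 < #|T| -> 0 < min_degree e ->
  (gamma0o e).*2 <= #|T|.
Proof.
move=> sg nT md.
case: (arg_minnP (same e) (erefl true : (fun _ : {set T} => true) set0)) => S _ Hmin.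
have Hm : forall S', same e S <= same e S' by move=> S'; exact: Hmin.
have A1 := @alliance T e S md nT (@min_prop T e sg S Hm).
have A2 : global_offensive0 e (~: S).
  apply: (@alliance T e) => // v; rewrite setCK inE negbK => vS.
  have E := @same_tog T e sg S v.
  have Hv := Hm (tog S v).
  have -> : deltaS e S v = \sum_y (hh e S v y : nat).
    rewrite dS_sum; apply: eq_bigr => y _; rewrite /hh vS.
    by case: (y \in S).
  have -> : deltaS e (~: S) v = \sum_y (cc e S v y : nat).
    rewrite dS_sum; apply: eq_bigr => y _; rewrite /cc vS ?inE.
    by case: (y \in S).
  lia.
have G1 := @gamma_le T e S A1; have G2 := @gamma_le T e _ A2.
have := cardsC S; lia.
Qed.
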